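(* Let $n, d, d_k, d_v \ge 1$, let $W_Q, W_K \in \mathbb{R}^{d\times d_k}$, $W_V \in \mathbb{R}^{d \times d_v}$ be fixed (deterministic) matrices, and for $x \in \mathbb{R}^{n\times d}$ let $$\mathrm{Attn}(x) = \mathrm{softmax}\!\left(\frac{(xW_Q)(xW_K)^\top}{\sqrt{d_k}}\right) x W_V,$$ with softmax applied row-wise. Let $h^{(0)} \in \mathbb{R}^{n\times d}$ be a random matrix whose rows $h^{(0)}_1,\dots,h^{(0)}_n$ are independent with $h^{(0)}_i \sim N(0,\sigma^2 I_d)$ for some $\sigma>0$. Then $\mathbb{E}[\mathrm{Attn}(h^{(0)})] = 0$.
   Context: Row-wise softmax: for $S\in\mathbb{R}^{n\times n}$, $\mathrm{softmax}(S)_{ij} = e^{S_{ij}}/\sum_{k} e^{S_{ik}}$. The expectation is entrywise. *)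

(* Defs.v *)
From HB Require Import structures.
From mathcomp Require Import all_boot all_order all_algebra.
From mathcomp Require Import all_classical all_reals all_analysis.
Set Implicit Arguments. Unset Strict Implicit. Unset Printing Implicit Defensive.
Import Order.TTheory GRing.Theory Num.Theory.
Local Open Scope ring_scope.
Local Open Scope classical_set_scope.

Definition softmax_rows (R : realType) (n : nat) (S : 'M[R]_(n, n)) : 'M[R]_(n, n) :=
  \matrix_(i < n, j < n) (expR (S i j) / \sum_(k < n) expR (S i k)).

Definition attn (R : realType) (n d dk dv : nat)
    (WQ WK : 'M[R]_(d, dk)) (WV : 'M[R]_(d, dv)) (x : 'M[R]_(n, d)) : 'M[R]_(n, dv) :=
  softmax_rows ((Num.sqrt (dk%:R))^-1 *: ((x *m WQ) *m (x *m WK)^T)) *m (x *m WV).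

(* h : T -> R^{n x d} is a random matrix whose rows are independent with
   h_i ~ N(0, sigma^2 I_d): every entry is a real random variable (measurable)
   and the joint law of the entries is the product of N(0, sigma^2) laws,
   i.e. for all measurable sets B i j,
     P[ forall i j, h_ij \in B i j ] = prod_i prod_j N(0,sigma^2)(B i j).
   (Rows independent + each row N(0, sigma^2 I_d) is exactly this.) *)
Definition gaussian_rows_matrix (d0 : measure_display) (T : measurableType d0)
    (R : realType) (P : probability T R) (n d : nat) (sigma : R)
    (h : T -> 'M[R]_(n, d)) : Prop :=
  (forall (i : 'I_n) (j : 'I_d), measurable_fun setT (fun w => h w i j)) /\
  (forall B : 'I_n -> 'I_d -> set R,
      (forall i j, measurable (B i j)) ->
      P [set w | forall i j, B i j (h w i j)] =
      (\prod_(i < n) \prod_(j < d) normal_prob 0 sigma (B i j))%E).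

(* Main.v *)
Require Import Defs.
From HB Require Import structures.
From mathcomp Require Import all_boot all_order all_algebra.
From mathcomp Require Import all_classical all_reals all_analysis.
From mathcomp Require Import measurable_realfun ring lra.
Import Order.TTheory GRing.Theory Num.Theory.
Local Open Scope ring_scope.

Section normal_facts.
Local Open Scope classical_set_scope.
Context {R : realType}.
Local Notation mu := (@lebesgue_measure R).
Local Notation RR := (measurableTypeR R).
Import HBNNSimple.

Lemma normal_integral_pdf (s : R) (f : RR -> \bar R) :
  (forall x, (0 <= f x)%E) -> measurable_fun setT f ->
  (\int[normal_prob 0 s]_x f x = \int[mu]_x (f x * (normal_pdf 0 s x)%:E))%E.
Proof.
move=> f0 mf.
set g : RR -> \bar R := fun x => (normal_pdf 0 s x)%:E.
have mg : measurable_fun setT g.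
  by apply/measurable_EFinP; exact: measurable_normal_pdf.
have g0 x : (0 <= g x)%E by rewrite lee_fin normal_pdf_ge0.
have mE : measurable (setT : set RR) by [].
pose h := nnsfun_approx mE mf.
have -> : (\int[normal_prob 0 s]_x f x =
    lim (\int[normal_prob 0 s]_x (EFin \o h n) x @[n --> \oo]))%E.
  have fE x : f x = lim ((EFin \o h n) x @[n --> \oo]).
    by apply/esym/cvg_lim => //; exact: cvg_nnsfun_approx.
  under eq_integral => x _ do rewrite fE.
  apply: monotone_convergence => //.
  - by move=> n; apply/measurable_EFinP.
  - by move=> n x Ex //=; rewrite lee_fin.
  - by move=> x Ex a b ab; rewrite lee_fin; exact/lefP/nd_nnsfun_approx.
have -> : (\int[mu]_x (f x * g x) =
    lim (\int[mu]_x ((EFin \o h n) x * g x) @[n --> \oo]))%E.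
  have fg x : (f x * g x = lim (((EFin \o h n) \* g) x @[n --> \oo]))%E.
    by apply/esym/cvg_lim => //; apply: cvgeZr; [by []|exact: cvg_nnsfun_approx].
  under eq_integral => x _ do rewrite fg.
  apply: monotone_convergence => [//| | |].
  - by move=> n; apply/emeasurable_funM => //; exact/measurable_EFinP.
  - by move=> n x _; apply: mule_ge0 => //=; rewrite lee_fin.
  - move=> x Ex a b ab/=; rewrite lee_wpmul2r ?lee_fin//; first exact: normal_pdf_ge0. by have /lefP H := nd_nnsfun_approx mE mf ab; exact: H.
suff suf n : (\int[mu]_x ((EFin \o h n) x * g x) =
    \int[normal_prob 0 s]_x (EFin \o h n) x)%E.
  do 2 f_equal; apply/funext => k; symmetry; exact (suf k).
transitivity (\int[normal_prob 0 s]_x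
   (\sum_(y \in range (h n)) (y * \1_(h n @^-1` [set y]) x)%:E))%E; last first.
  by apply: eq_integral => t tE; rewrite /= fimfunE -fsumEFin.
have indich m r : measurable_fun setT (fun x : RR => (r * \1_(h m @^-1` [set r]) x)%:E).
  by apply: (measurable_comp measurableT) => //; exact: measurable_funM.
rewrite ge0_integral_fsum//; last by move=> m y Ey; exact: nnfun_muleindic_ge0.
transitivity (\int[mu]_x (\sum_(y \in range (h n))
    (y * \1_(h n @^-1` [set y]) x)%:E * g x))%E.
  under [RHS]eq_integral => x xE.
    rewrite -ge0_mule_fsuml => [|y]; last exact: nnfun_muleindic_ge0.
    rewrite fsumEFin // -(fimfunE _ x); over.
  by [].
rewrite ge0_integral_fsum//; last 2 first.
  - by move=> y; apply: emeasurable_funM => //.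
  - by move=> m y Ey; rewrite mule_ge0 ?nnfun_muleindic_ge0.
apply: eq_fsbigr => r rhn.
under [RHS]eq_integral do rewrite EFinM.
rewrite integralZl_indic_nnsfun => //.
under eq_integral do rewrite EFinM -muleA.
rewrite ge0_integralZl//.
- under eq_integral do rewrite muleC.
  rewrite (eq_integral (g \_ (h n @^-1` [set r]))); last first.
    by move=> x xE; rewrite epatch_indic.
  rewrite -integral_mkcondr integral_indic// setTI.
  by rewrite /normal_prob /g setIT.
- by apply: emeasurable_funM => //; exact/measurable_EFinP.
- by move=> t _; apply: mule_ge0 => //=; rewrite lee_fin ?normal_pdf_ge0.
- by move: rhn; rewrite inE => -[t _ <-]; rewrite lee_fin.
Qed.

End normal_facts.


Section normal_facts2.
Local Open Scope classical_set_scope.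
Context {R : realType}.
Local Notation mu := (@lebesgue_measure R).
Local Notation RR := (measurableTypeR R).

Lemma normal_probN (s : R) (B : set RR) : s != 0 -> measurable B ->
  normal_prob 0 s (-%R @^-1` B) = normal_prob 0 s B.
Proof.
move=> s0 mB; rewrite /normal_prob.
have e x : normal_pdf 0 s (- x) = normal_pdf 0 s x.
  by rewrite /normal_pdf (negbTE s0) /normal_fun !subr0 sqrrN.
transitivity (\int[mu]_(x in -%R @^-1` B)
   ((fun y : RR => (normal_pdf 0 s y)%:E) \o -%R) x)%E.
  by apply: eq_integral => x _; rewrite /= e.
have mN : measurable_fun [set: RR] (-%R : RR -> RR) by [].
rewrite -(ge0_integral_pushforward mN)//.
- apply: eq_measure_integral => A mA _; exact (lebesgue_measureN mA).
- by apply: measurable_funTS; apply/measurable_EFinP; exact: measurable_normal_pdf.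
- by move=> y _; rewrite lee_fin normal_pdf_ge0.
Qed.

Lemma key_bound (s x : R) : 0 < s ->
  `|x| * expR (- (x - 0) ^+ 2 / (s ^+ 2 *+ 2)) <=
  2 * s * expR (- (x - 0) ^+ 2 / ((2 * s) ^+ 2 *+ 2)).
Proof.
move=> s0; rewrite subr0.
set a := x ^+ 2 / ((2 * s) ^+ 2 *+ 2).
have sn0 : s != 0 by rewrite gt_eqF.
have ha : x ^+ 2 / (s ^+ 2 *+ 2) = a * 4.
  by rewrite /a; field.
rewrite mulNr ha mulNr.
have -> : - (a * 4) = - a + - (3 * a) by ring.
rewrite expRD.
have a0 : 0 <= a by rewrite /a divr_ge0 // ?sqr_ge0 // mulrn_wge0 // sqr_ge0.
suff H : `|x| * expR (- (3 * a)) <= 2 * s.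
  rewrite mulrCA mulrC ler_pM2r ?expR_gt0 //.
rewrite expRN ler_pdivrMr ?expR_gt0 //.
apply: (le_trans _ (ler_wpM2l _ (expR_ge1Dx (3 * a)))); last by rewrite mulr_ge0 // ltW.
have hx : x ^+ 2 = `|x| ^+ 2 by rewrite real_normK ?num_real.
set t := `|x| in hx *.
have t0 : 0 <= t by rewrite /t normr_ge0.
set u := (4 * s)^-1.
have hu : 4 * s * u = 1 by rewrite /u divff // mulf_neq0 // pnatr_eq0.
have u0 : 0 < u by rewrite /u invr_gt0 mulr_gt0 // ltr0n.
have -> : 2 * s * (1 + 3 * a) = 2 * s + 3 * t ^+ 2 * u.
  by rewrite /a hx /u; field.
have s4 : 0 < 4 * s by rewrite mulr_gt0 // ltr0n.
rewrite -(ler_pM2r s4).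
have -> : (2 * s + 3 * t ^+ 2 * u) * (4 * s) = 8 * s ^+ 2 + 3 * t ^+ 2 * (4 * s * u) by ring.
rewrite hu mulr1.
have h1 : 0 <= (3 * t - 2 * s) ^+ 2 by rewrite sqr_ge0.
nra.
Qed.

Lemma normal_abs_lty (s : R) : 0 < s ->
  (\int[normal_prob 0 s]_x (`|x|)%:E < +oo)%E.
Proof.
move=> s0.
have sn0 : s != 0 by rewrite gt_eqF.
have s2n0 : 2 * s != 0 by rewrite mulf_neq0 // pnatr_eq0.
have mabs : measurable_fun [set: RR] (fun x : RR => (`|x|)%:E).
  by apply/measurable_EFinP; exact: normr_measurable.
rewrite (@normal_integral_pdf R s (fun x : RR => (`|x|)%:E)) //.
set C := 2 * s * normal_peak s / normal_peak (2 * s).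
have C0 : 0 <= C by rewrite /C; apply: mulr_ge0; [apply: mulr_ge0; [apply: mulr_ge0 => //; exact: ltW|exact: normal_peak_ge0]|rewrite invr_ge0; exact: normal_peak_ge0].
have mpdf t : measurable_fun [set: RR] (fun x : RR => (normal_pdf 0 t x)%:E).
  by apply/measurable_EFinP; exact: measurable_normal_pdf.
apply: (@le_lt_trans _ _ (\int[mu]_x (C%:E * (normal_pdf 0 (2 * s) x)%:E))%E).
  apply: ge0_le_integral => //.
  - by move=> x _; rewrite mule_ge0 // lee_fin normal_pdf_ge0.
  - by apply: emeasurable_funM => //.
  - by apply: emeasurable_funM => //.
  - move=> x _; rewrite -!EFinM lee_fin /normal_pdf (negbTE sn0) (negbTE s2n0).
    rewrite /C /normal_fun.
    have p2 : 0 < normal_peak (2 * s) by rewrite normal_peak_gt0.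
    rewrite mulrCA -mulrA.
    rewrite [X in _ <= X](_ : _ = normal_peak s * (2 * s * expR (- (x - 0) ^+ 2 / ((2 * s) ^+ 2 *+ 2)))); last first.
      by field; rewrite gt_eqF.
    by rewrite ler_pM2l ?normal_peak_gt0 // key_bound.
rewrite ge0_integralZl //; last by move=> x _; rewrite lee_fin normal_pdf_ge0.
by rewrite integral_normal_pdf mule1 ltry.
Qed.

End normal_facts2.


Definition MX (R : realType) n d := 'M[R]_(n,d).
HB.instance Definition _ R n d := Choice.on (MX R n d).
HB.instance Definition _ R n d := isPointed.Build (MX R n d) 0.

Section mx_measurable.
Local Open Scope classical_set_scope.
Variables (R : realType) (n d : nat).

Definition rect (B : 'I_n -> 'I_d -> set R) : set (MX R n d) :=
  [set M | forall i j, B i j (M i j)].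
Definition rects : set (set (MX R n d)) :=
  [set A | exists B, (forall i j, measurable (B i j)) /\ A = rect B].
Definition XM := g_sigma_algebraType rects.

Lemma coord_measurable (i : 'I_n) (j : 'I_d) :
  measurable_fun [set: XM] (fun M : XM => (M : MX R n d) i j).
Proof.
move=> _ A mA; rewrite setTI; apply: sub_sigma_algebra.
exists (fun i' j' => if (i' == i) && (j' == j) then A else setT); split.
  by move=> i' j'; case: ifP.
apply/seteqP; split => M /=.
- by move=> HA i' j'; case: ifP => [/andP[/eqP-> /eqP->]|].
- by move=> H; have := H i j; rewrite !eqxx.
Qed.

Lemma measurable_to_XM d0 (T : measurableType d0) (g : T -> XM) :
  (forall i j, measurable_fun [set: T] (fun w => (g w : MX R n d) i j)) ->
  measurable_fun [set: T] g.
Proof.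
move=> mg.
suff Hpre : preimage_set_system [set: T] g rects `<=` measurable.
  exact (@measurability _ _ T XM setT g rects erefl Hpre).
move=> _ [_ [B [mB ->]] <-]; rewrite setTI.
have -> : g @^-1` rect B = \bigcap_(i in [set: 'I_n]) \bigcap_(j in [set: 'I_d])
    ((fun w => (g w : MX R n d) i j) @^-1` B i j).
  apply/seteqP; split => w /= H.
    by move=> i _ j _; exact: H.
  by move=> i j; exact: (H i I j I).
apply: fin_bigcap_measurable; first exact: finite_finset.
move=> i _; apply: fin_bigcap_measurable; first exact: finite_finset.
by move=> j _; rewrite -[X in measurable X]setTI; exact: mg.
Qed.

Lemma rects_setI : setI_closed rects.
Proof.
move=> _ _ [B1 [mB1 ->]] [B2 [mB2 ->]].
exists (fun i j => B1 i j `&` B2 i j); split.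
  by move=> i j; exact: measurableI.
apply/seteqP; split => M /=.
- by move=> [H1 H2] i j; split; [exact: H1|exact: H2].
- by move=> H; split => i j; have [] := H i j.
Qed.

Lemma rect_setT : rects [set: MX R n d].
Proof.
exists (fun _ _ => setT); split => //.
by apply/seteqP; split => M.
Qed.

Lemma XM_measure_unique (m1 m2 : {finite_measure set XM -> \bar R}) :
  (forall B, (forall i j, measurable (B i j)) -> m1 (rect B) = m2 (rect B)) ->
  forall A, measurable A -> m1 A = m2 A.
Proof.
move=> H A mA.
have HU := @measure_unique _ R XM rects (fun _ => setT) erefl.
apply: (HU _ _ _ m1 m2) => //.
- move=> A1 A2 HA1 HA2; exact (rects_setI A1 A2 HA1 HA2).
- by move=> _; exact rect_setT.
- by rewrite bigcup_const.
- by move=> _ [B [mB ->]]; exact: H.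
- by move=> _; exact: fin_num_fun_lty.
Qed.

End mx_measurable.


Section attn_facts.
Local Open Scope classical_set_scope.
Variables (R : realType) (n d dk dv : nat).
Variables (WQ WK : 'M[R]_(d, dk)) (WV : 'M[R]_(d, dv)).

Lemma attn_opp (M : 'M[R]_(n, d)) : attn WQ WK WV (- M) = - attn WQ WK WV M.
Proof.
by rewrite /attn !mulNmx !raddfN /= opprK.
Qed.

Lemma softmax_ge0 (S : 'M[R]_(n, n)) i k : 0 <= softmax_rows S i k.
Proof.
rewrite /softmax_rows mxE divr_ge0 ?expR_ge0 //.
by apply: sumr_ge0 => l _; exact: expR_ge0.
Qed.

Lemma softmax_le1 (S : 'M[R]_(n, n)) i k : softmax_rows S i k <= 1.
Proof.
rewrite /softmax_rows mxE.
have Hs : expR (S i k) <= \sum_(l < n) expR (S i l).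
  rewrite (bigD1 k) //= lerDl; apply: sumr_ge0 => l _; exact: expR_ge0.
have Hp : 0 < \sum_(l < n) expR (S i l) by apply: lt_le_trans Hs; exact: expR_gt0.
by rewrite ler_pdivrMr // mul1r.
Qed.

Lemma attn_bound (M : 'M[R]_(n, d)) i j :
  `|attn WQ WK WV M i j| <= \sum_(k < n) \sum_(l < d) `|M k l| * `|WV l j|.
Proof.
rewrite /attn mxE.
apply: (le_trans (ler_norm_sum _ _ _)); apply: ler_sum => k _.
rewrite normrM ger0_norm ?softmax_ge0 //.
apply: (le_trans (y := `|(M *m WV) k j|)).
  rewrite -[X in _ <= X]mul1r ler_wpM2r ?normr_ge0 //; exact: softmax_le1.
rewrite mxE; apply: (le_trans (ler_norm_sum _ _ _)); apply: ler_sum => l _.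
by rewrite normrM.
Qed.


Lemma mf_ext d0 (T : measurableType d0) (f g : T -> R) :
  (forall x, f x = g x) -> measurable_fun [set: T] g -> measurable_fun [set: T] f.
Proof. by move=> e; have -> : f = g by apply/funext. Qed.

Lemma mMW (k : 'I_n) a (W : 'M[R]_(d, a)) (a0 : 'I_a) :
  measurable_fun [set: XM R n d] (fun M : XM R n d => ((M : 'M[R]_(n, d)) *m W) k a0).
Proof.
apply: (@mf_ext _ _ _ (fun M : XM R n d => \sum_(b < d) (M : 'M[R]_(n, d)) k b * W b a0)).
  by move=> M; rewrite mxE.
apply: measurable_sum => b; apply: measurable_funM => //.
exact: coord_measurable.
Qed.

Lemma mS (i k : 'I_n) :
  measurable_fun [set: XM R n d] (fun M : XM R n d =>
    ((Num.sqrt (dk%:R))^-1 *: (((M : 'M[R]_(n, d)) *m WQ) *m ((M : 'M[R]_(n, d)) *m WK)^T)) i k).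
Proof.
apply: (@mf_ext _ _ _ (fun M : XM R n d => (Num.sqrt (dk%:R))^-1 *
   \sum_(a < dk) (((M : 'M[R]_(n, d)) *m WQ) i a * ((M : 'M[R]_(n, d)) *m WK) k a))).
  by move=> M; rewrite !mxE; apply: congr1; apply: eq_bigr => a _; rewrite [(_ ^T) a k]mxE.
apply: measurable_funM => //.
apply: measurable_sum => a; apply: measurable_funM; exact: mMW.
Qed.

Lemma attn_measurable (i : 'I_n) (j : 'I_dv) :
  measurable_fun [set: XM R n d] (fun M : XM R n d => attn WQ WK WV (M : 'M[R]_(n, d)) i j).
Proof.
set S := fun M : XM R n d =>
  (Num.sqrt (dk%:R))^-1 *: (((M : 'M[R]_(n, d)) *m WQ) *m ((M : 'M[R]_(n, d)) *m WK)^T).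
apply: (@mf_ext _ _ _ (fun M : XM R n d => \sum_(k < n)
   (expR (S M i k) * expR (- ln (\sum_(l < n) expR (S M i l)))) * ((M : 'M[R]_(n, d)) *m WV) k j)).
  move=> M; rewrite /attn mxE; apply: eq_bigr => k _; congr (_ * _).
  rewrite /softmax_rows mxE expRN lnK //.
  rewrite posrE (bigD1 k) //=; apply: (lt_le_trans (expR_gt0 (S M i k))).
  by rewrite lerDl; apply: sumr_ge0 => l _; exact: expR_ge0.
apply: measurable_sum => k; apply: measurable_funM; last exact: mMW.
apply: measurable_funM.
  by apply: measurableT_comp; [exact: measurable_expR|exact: mS].
apply: measurableT_comp; first exact: measurable_expR.
apply: measurableT_comp; first exact: measurable_funN.
apply: measurableT_comp; first exact: measurable_ln.
apply: measurable_sum => l.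
by apply: measurableT_comp; [exact: measurable_expR|exact: mS].
Qed.

End attn_facts.


Section main_lemmas.
Local Open Scope classical_set_scope.

Definition mkmfun d1 d2 (T1 : measurableType d1) (T2 : measurableType d2)
  (f : T1 -> T2) (mf : measurable_fun [set: T1] f) : {mfun T1 >-> T2} :=
  MeasurableFun.Pack (MeasurableFun.Class (isMeasurableFun.Build _ _ _ _ f mf)).

Lemma rect_prob (R : realType) (n d : nat) (d0 : measure_display)
    (T : measurableType d0) (P : probability T R) (sigma : R)
    (h : T -> 'M[R]_(n, d)) (hh : gaussian_rows_matrix P sigma h)
    (k : 'I_n) (l : 'I_d) (B : set R) : measurable B ->
  P [set w | B (h w k l)] = normal_prob 0 sigma B.
Proof.
move=> mB; case: hh => _ hp.
have := hp (fun i' j' => if (i' == k) && (j' == l) then B else setT).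
have -> : [set w | forall i j,
    (if (i == k) && (j == l) then B else setT) (h w i j)] = [set w | B (h w k l)].
  apply/seteqP; split => w /=.
  - by move=> H; have := H k l; rewrite !eqxx.
  - by move=> HB i' j'; case: ifP => [/andP[/eqP-> /eqP->]|].
move=> ->; first last.
  by move=> i' j'; case: ifP.
rewrite (bigD1 k) //= (bigD1 l) //= !eqxx /=.
rewrite big1 ?mule1; last first.
  by move=> jj /negbTE ->; rewrite probability_setT.
rewrite big1 ?mule1 //.
move=> i' /negbTE ->; rewrite big1 // => j' _.
by rewrite probability_setT.
Qed.


Lemma coord_integrable (R : realType) (n d : nat) (d0 : measure_display)
    (T : measurableType d0) (P : probability T R) (sigma : R) (hs : 0 < sigma)
    (h : T -> 'M[R]_(n, d)) (hh : gaussian_rows_matrix P sigma h)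
    (k : 'I_n) (l : 'I_d) :
  P.-integrable [set: T] (fun w => (`|h w k l|)%:E).
Proof.
have mkl : measurable_fun [set: T] (fun w => h w k l) by case: hh.
apply/integrableP; split.
  by apply/measurable_EFinP; apply: measurableT_comp => //; exact: normr_measurable.
have mabs : measurable_fun [set: measurableTypeR R] (fun x : measurableTypeR R => (`|x|)%:E).
  by apply/measurable_EFinP; exact: normr_measurable.
set hkl : T -> measurableTypeR R := fun w => h w k l.
have mkl' : measurable_fun [set: T] hkl by exact mkl.
have -> : (\int[P]_w `|(`|h w k l|)%:E| = \int[P]_(w in hkl @^-1` setT)
    ((fun x : measurableTypeR R => (`|x|)%:E) \o hkl) w)%E.
  by rewrite preimage_setT; apply: eq_integral => w _ /=; rewrite normr_id.
rewrite -(ge0_integral_pushforward mkl'); [|by []|exact: mabs|by move=> x _; rewrite lee_fin normr_ge0].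
have -> : (\int[pushforward P hkl]_y (`|y|)%:E =
    \int[normal_prob 0 sigma]_y (`|y|)%:E)%E.
  apply: eq_measure_integral => A mA _.
  exact (rect_prob _ _ _ _ _ _ _ _ hh k l A mA).
exact: normal_abs_lty hs.
Qed.

End main_lemmas.

Theorem proposition3 (R : realType) (n d dk dv : nat)
    (hn : (1 <= n)%N) (hd : (1 <= d)%N) (hdk : (1 <= dk)%N) (hdv : (1 <= dv)%N)
    (WQ WK : 'M[R]_(d, dk)) (WV : 'M[R]_(d, dv))
    (d0 : measure_display) (T : measurableType d0) (P : probability T R)
    (sigma : R) (hsigma : 0 < sigma) (h : T -> 'M[R]_(n, d))
    (hh : gaussian_rows_matrix P sigma h) :
  forall (i : 'I_n) (j : 'I_dv),
    P.-integrable setT (fun w => ((attn WQ WK WV (h w)) i j)%:E) /\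
    ('E_P[fun w => (attn WQ WK WV (h w)) i j])%E = 0%E.
Proof.
Local Open Scope classical_set_scope.
move=> i j.
have hm : forall k l, measurable_fun setT (fun w => h w k l) by case: hh.
have mh : measurable_fun [set: T] (h : T -> XM R n d).
  by apply: measurable_to_XM.
have mhN : measurable_fun [set: T] ((fun w => - h w) : T -> XM R n d).
  apply: measurable_to_XM => k l.
  apply: (@mf_ext R _ _ _ (fun w => - h w k l)).
    by move=> w; rewrite mxE.
  by apply: measurable_funN; exact: hm.
set F : XM R n d -> R := fun M => attn WQ WK WV (M : 'M[R]_(n, d)) i j.
have mF : measurable_fun [set: XM R n d] F := attn_measurable R n d dk dv WQ WK WV i j.
have mFE : measurable_fun [set: XM R n d] (EFin \o F) by apply/measurable_EFinP.
have Hint : P.-integrable setT (fun w => (F (h w))%:E).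
  apply: (@le_integrable _ _ _ _ _ measurableT _
     (fun w => (\sum_(k < n) \sum_(l < d) `|h w k l| * `|WV l j|)%:E)).
  - apply/measurable_EFinP; exact: (measurableT_comp mF mh).
  - move=> w _; rewrite lee_fin (ger0_norm (x := \sum_(k < n) _)); last first.
      by apply: sumr_ge0 => k _; apply: sumr_ge0 => l _; rewrite mulr_ge0.
    exact: attn_bound.
  have -> : (fun w => (\sum_(k < n) \sum_(l < d) `|h w k l| * `|WV l j|)%:E) =
      (fun w => \sum_(k < n) \sum_(l < d) ((`|h w k l|)%:E * (`|WV l j|)%:E))%E.
    apply/funext => w; rewrite -sumEFin; apply: eq_bigr => k _.
    by rewrite -sumEFin; apply: eq_bigr => l _; rewrite EFinM.
  apply: integrable_sum => // k _; apply: integrable_sum => // l _.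
  exact (integrableZr measurableT (`|WV l j|) (coord_integrable R n d d0 T P sigma hsigma h hh k l)).
split; first exact: Hint.
rewrite unlock /=.
change (\int[P]_w (F (h w))%:E = 0)%E.
set E := (\int[P]_w (F (h w))%:E)%E.
pose H1 : {mfun T >-> XM R n d} := mkmfun _ _ _ _ _ mh.
pose H2 : {mfun T >-> XM R n d} := mkmfun _ _ _ _ _ mhN.
have hp := hh.2.
have eqd : forall A, measurable A ->
    distribution P H1 A = distribution P H2 A.
  apply: XM_measure_unique => B mB.
  rewrite /distribution /pushforward /=.
  transitivity (\prod_(k < n) \prod_(l < d) normal_prob 0 sigma (B k l))%E.
    exact: (hp B mB).
  transitivity (P [set w | forall k l, (-%R @^-1` B k l) (h w k l)]); last first.
    change (P [set w | forall k l, (-%R @^-1` B k l) (h w k l)] = P ((fun w => - h w) @^-1` rect R n d B)); congr (P _).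
    by apply/seteqP; split => w /= H k l; have := H k l; rewrite mxE.
  rewrite (hp (fun k l => -%R @^-1` B k l)); last first.
    move=> k l; rewrite -[X in measurable X]setTI; have mN : measurable_fun [set: R] (-%R : R -> R) by []. exact: (mN measurableT _ (mB k l)).
  apply: eq_bigr => k _; apply: eq_bigr => l _.
  rewrite normal_probN //; [apply/negP => /eqP s0; move: hsigma; by rewrite s0 ltxx|exact: (mB k l)].
have HintN : P.-integrable setT ((EFin \o F) \o H2).
  apply: (eq_integrable measurableT (fun w => (-1)%:E * (F (h w))%:E)%E).
    move=> w _; rewrite /= /F attn_opp; have -> : (- attn WQ WK WV (h w)) i j = - attn WQ WK WV (h w) i j by rewrite mxE. by rewrite EFinN mulN1e.
  exact: integrableZl.
have EN : E = ((-1)%:E * E)%E.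
  transitivity (\int[P]_w ((EFin \o F) \o H1) w)%E; first by [].
  rewrite -integral_distribution //.
  rewrite (eq_measure_integral (distribution P H2)); last by move=> A mA _; exact: eqd.
  rewrite integral_distribution // -integralZl //.
  apply: eq_integral => w _; rewrite /= /F attn_opp; have -> : (- attn WQ WK WV (h w)) i j = - attn WQ WK WV (h w) i j by rewrite mxE. by rewrite EFinN mulN1e.
have [r Er] : exists r, E = r%:E.
  exists (fine E); rewrite fineK //; exact: integrable_fin_num Hint.
move: EN; rewrite Er -EFinM => /eqP; rewrite eqe => /eqP Hr.
have -> : r = 0 by lra.
by [].
Qed.
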